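(* Let $d\ge1$, $\sigma>0$, and let $A_0,A_1\in\mathbb{R}^{d\times d}$ be constant matrices. Let $G:[0,\infty)\to\mathbb{R}^{d\times d}$ be continuous with $A_1G(\vartheta)=G(\vartheta)A_1$ for all $\vartheta\ge0$, and let $G^*(\vartheta)=G(0)$ for $\vartheta\in[-\sigma,0)$, $G^*(\vartheta)=G(\vartheta)$ for $\vartheta\ge0$. Let $Z$ be the function defined in the context. Then \[ X(\vartheta)=\int_0^{\vartheta}Z(\vartheta-\sigma-s)\,G^*(s)\,ds,\qquad\vartheta\in[-\sigma,\infty), \] satisfies \[ \dot X(\vartheta)=A_0X(\vartheta-\sigma)+X(\vartheta-\sigma)A_1+G(\vartheta),\ \ \vartheta\ge0,\qquad X(\vartheta)=\Theta,\ \ \vartheta\in[-\sigma,0]. \]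
   Context: $\Theta$ and $I$ denote the $d\times d$ zero and identity matrices. Define matrices $Q_{r+1}(r\sigma)$, $r=0,1,2,\dots$, recursively by $Q_1(0)=I$ and $Q_{r+1}(r\sigma)=A_0Q_r((r-1)\sigma)+Q_r((r-1)\sigma)A_1$ for $r\ge 1$. Define $Z:\mathbb{R}\to\mathbb{R}^{d\times d}$ by $Z(\vartheta)=\Theta$ for $\vartheta<-\sigma$, and, for each integer $u\ge 0$ and $\vartheta\in[(u-1)\sigma,u\sigma)$, \[ Z(\vartheta)=\sum_{r=0}^{u}Q_{r+1}(r\sigma)\frac{(\vartheta-(r-1)\sigma)^r}{r!}. \] *)

(* Defs.v *)
From Stdlib Require Import Reals.
From Coquelicot Require Import Coquelicot.
From mathcomp Require Import all_boot all_algebra.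
From mathcomp Require Import Rstruct.

Set Implicit Arguments.
Unset Strict Implicit.
Unset Printing Implicit Defensive.

Import GRing.Theory.
Local Open Scope ring_scope.

(* Qm A0 A1 r  is the matrix  Q_{r+1}(r sigma)  of the paper:
   Q_1(0) = I,  Q_{r+1}(r sigma) = A0 Q_r((r-1)sigma) + Q_r((r-1)sigma) A1. *)
Fixpoint Qm (d : nat) (A0 A1 : 'M[R]_d) (r : nat) : 'M[R]_d :=
  match r with
  | O => 1%:M
  | S r' => A0 *m Qm A0 A1 r' + Qm A0 A1 r' *m A1
  end.

(* The index u >= 0 with t in [(u-1) sigma, u sigma), for t >= -sigma:
   u = floor(t/sigma) + 1, which is Stdlib's  up (t/sigma). *)
Definition Zidx (sigma t : R) : nat := Z.to_nat (up (Rdiv t sigma)).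

Definition Zfun (d : nat) (sigma : R) (A0 A1 : 'M[R]_d) (t : R) : 'M[R]_d :=
  if Rlt_dec t (Ropp sigma) then 0
  else \sum_(r < (Zidx sigma t).+1)
         (Rdiv (pow (Rminus t (Rmult (Rminus (INR r) 1) sigma)) r) (INR (Factorial.fact r)))
           *: Qm A0 A1 r.

Definition Gstar (d : nat) (G : R -> 'M[R]_d) (t : R) : 'M[R]_d :=
  if Rlt_dec t 0 then G 0%R else G t.

Definition Xfun (d : nat) (sigma : R) (A0 A1 : 'M[R]_d) (G : R -> 'M[R]_d)
  (t : R) : 'M[R]_d :=
  \matrix_(i, j) RInt (fun s => (Zfun sigma A0 A1 (Rminus (Rminus t sigma) s)
                                   *m Gstar G s) i j) 0%R t.

(* Main.v *)
Require Import Defs.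
From Stdlib Require Import Reals.
From Coquelicot Require Import Coquelicot.
From mathcomp Require Import all_boot all_algebra.
From mathcomp Require Import Rstruct.
From Stdlib Require Import Lra Lia FunctionalExtensionality.
Import GRing.Theory.

Local Open Scope R_scope.



Lemma addRE (x y : R) : (x + y)%R = Rplus x y. Proof. reflexivity. Qed.
Lemma mulRE (x y : R) : (x * y)%R = Rmult x y. Proof. reflexivity. Qed.

Lemma zeroRE : (0%R : R) = 0. Proof. reflexivity. Qed.

Definition cont (f : R -> R) := forall x, continuous f x.

Fixpoint Kf (f : R -> R) (r : nat) (c : R) : R :=
  match r with
  | O => RInt f 0 (Rmax c 0)
  | S r' => RInt (Kf f r') 0 c
  end.

Lemma Rmax0_eq s : Rmax s 0 = (s + Rabs s) / 2.
Proof. unfold Rmax, Rabs; destruct (Rle_dec s 0); destruct (Rcase_abs s); lra. Qed.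

Lemma cont_Rmax0 x : continuous (fun s => Rmax s 0) x.
Proof.
  apply (continuous_ext (fun s => (s + Rabs s) * / 2)).
  { intros s; rewrite Rmax0_eq; reflexivity. }
  apply (continuous_mult (fun s => s + Rabs s) (fun _ => / 2)).
  - apply (continuous_plus (fun s => s) (fun s => Rabs s)).
    + apply continuous_id.
    + apply (continuous_Rabs_comp (fun s => s)). apply continuous_id.
  - apply continuous_const.
Qed.

Lemma is_derive_RInt0 f c : cont f -> is_derive (fun b => RInt f 0 b) c (f c).
Proof.
  intros Hf. apply is_derive_RInt with (a := 0).
  - apply filter_forall; intros b. apply RInt_correct, ex_RInt_continuous.
    intros; apply Hf.
  - apply Hf.
Qed.

Lemma Kf_derivS f r (c : R) : cont f -> cont (Kf f r) -> is_derive (Kf f (S r)) c (Kf f r c).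
Proof.
  intros Hf Hk. simpl. apply (is_derive_RInt0 (Kf f r) c Hk).
Qed.

Lemma Kf_cont f r : cont f -> cont (Kf f r).
Proof.
  intros Hf; induction r as [|r IH]; intros x.
  - simpl. apply (continuous_comp (fun s => Rmax s 0) (fun b => RInt f 0 b)).
    + apply cont_Rmax0.
    + apply (ex_derive_continuous (K:=R_AbsRing) (V:=R_NormedModule)). eexists. apply is_derive_RInt0, Hf.
  - apply (ex_derive_continuous (K:=R_AbsRing) (V:=R_NormedModule)). eexists. apply Kf_derivS; auto.
Qed.

Lemma Kf_deriv0 f c : cont f -> 0 < c -> is_derive (Kf f 0) c (f c).
Proof.
  intros Hf Hc. apply is_derive_ext_loc with (f := fun b => RInt f 0 b).
  - apply (filter_imp (fun y => 0 < y)).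
    + intros y Hy; simpl. rewrite Rmax_left; [reflexivity|lra].
    + apply (open_gt 0 c Hc).
  - apply is_derive_RInt0, Hf.
Qed.

Lemma RInt_zero (a b : R) : RInt (fun _ => 0) a b = 0.
Proof. rewrite RInt_const. unfold scal; simpl. unfold mult; simpl. ring. Qed.

Lemma Kf_nonpos f r c : c <= 0 -> Kf f r c = 0.
Proof.
  revert c; induction r as [|r IH]; intros c Hc; simpl.
  - rewrite Rmax_right; [|lra]. apply (RInt_point (V:=R_CompleteNormedModule)).
  - rewrite (RInt_ext _ (fun _ => 0)). apply RInt_zero.
    intros x Hx. apply IH. rewrite Rmax_left in Hx; lra.
Qed.



Definition hk (f : R -> R) (n : nat) (u v : R) := (u - v)^n / INR (Factorial.fact n) * f v.
Definition Hf (f : R -> R) (r : nat) (c : R) : R := RInt (hk f r c) 0 c.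

Lemma hk_deriv f n u v : is_derive (fun u => hk f (S n) u v) u (hk f n u v).
Proof.
  unfold hk. auto_derive; auto.
  change (match n with 0%nat => 1 | _ => INR n + 1 end) with (INR (S n)).
  rewrite plus_INR mult_INR S_INR.
  replace (u + - v) with (u - v) by ring.
  generalize ((u-v)^n) (f v) (INR n) (INR (Factorial.fact n)) (INR_fact_neq_0 n) (pos_INR n).
  clear. intros p a b F HF Hb.
  have HF2 : F + b * F <> 0.
  { replace (F + b * F) with (F * (b + 1)) by ring.
    apply Rmult_integral_contrapositive; split; lra. }
  field. auto.
Qed.

Lemma hk_cont1 f n u z : cont f -> continuous (hk f n u) z.
Proof.
  intros Hf. unfold hk.
  apply (continuous_mult (fun v => (u - v)^n / INR (Factorial.fact n)) f).
  - apply (ex_derive_continuous (K:=R_AbsRing) (V:=R_NormedModule)). auto_derive. auto.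
  - apply Hf.
Qed.

Lemma cont_pt f x : continuous f x -> continuity_pt f x.
Proof. intros H. apply continuity_pt_filterlim. exact H. Qed.

Lemma hk_cont2 f n u v : cont f -> continuity_2d_pt (hk f n) u v.
Proof.
  intros Hf. unfold hk.
  apply (continuity_2d_pt_mult (fun u v => (u - v)^n / INR (Factorial.fact n)) (fun u v => f v)).
  - apply (continuity_1d_2d_pt_comp (fun z => z^n / INR (Factorial.fact n)) (fun u v => u - v)).
    + apply cont_pt. apply (ex_derive_continuous (K:=R_AbsRing) (V:=R_NormedModule)). auto_derive. auto.
    + apply continuity_2d_pt_minus. apply continuity_2d_pt_id1. apply continuity_2d_pt_id2.
  - apply (continuity_1d_2d_pt_comp f (fun u v => v)).
    + apply cont_pt, Hf.
    + apply continuity_2d_pt_id2.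
Qed.

Lemma Hf_derivS f r (c : R) : cont f -> is_derive (Hf f (S r)) c (Hf f r c).
Proof.
  intros Hf0.
  have Hex : forall y a b, ex_RInt (hk f (S r) y) a b.
  { intros y a b. apply (ex_RInt_continuous (V:=R_CompleteNormedModule)). intros; apply hk_cont1, Hf0. }
  have HD : forall u v, Derive (fun u => hk f (S r) u v) u = hk f r u v.
  { intros u v. apply is_derive_unique, hk_deriv. }
  have Hc2 : forall u v, continuity_2d_pt (fun u v => Derive (fun u => hk f (S r) u v) u) u v.
  { intros u v. apply (continuity_2d_pt_ext (hk f r)).
    - intros; rewrite HD; reflexivity.
    - apply hk_cont2, Hf0. }
  have H := is_derive_RInt_param_bound_comp (hk f (S r)) (fun _ => 0) (fun x => x) c 0 1.
  have E : Hf f r c = RInt (fun t => Derive (fun u => hk f (S r) u t) c) 0 c + - hk f (S r) c 0 * 0 + hk f (S r) c c * 1.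
  { unfold Hf. rewrite (RInt_ext (fun t => Derive _ c) (hk f r c)).
    - have Hz : hk f (S r) c c = 0.
      { unfold hk. assert (Hcc : c - c = 0) by (apply Rminus_diag). rewrite Hcc. rewrite pow_i; [|apply Nat.lt_0_succ]. unfold Rdiv. rewrite !Rmult_0_l. reflexivity. }
      rewrite Hz Rmult_0_r Rmult_0_l !Rplus_0_r. reflexivity.
    - intros; apply HD. }
  rewrite E. unfold Hf. apply H.
  - apply filter_forall; intros; apply Hex.
  - exists (mkposreal 1 Rlt_0_1). apply filter_forall; intros; apply Hex.
  - exists (mkposreal 1 Rlt_0_1). apply filter_forall; intros; apply Hex.
  - apply (is_derive_const (K:=R_AbsRing) (V:=R_NormedModule)).
  - apply (is_derive_id (K:=R_AbsRing)).
  - exists (mkposreal 1 Rlt_0_1). apply filter_forall; intros; eexists; apply hk_deriv.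
  - intros; apply Hc2.
  - exists (mkposreal 1 Rlt_0_1). intros; apply Hc2.
  - exists (mkposreal 1 Rlt_0_1). intros; apply Hc2.
  - apply cont_pt, hk_cont1, Hf0.
  - apply cont_pt, hk_cont1, Hf0.
Qed.

Lemma Hf_Kf f r c : cont f -> 0 <= c -> Hf f r c = Kf f r c.
Proof.
  intros Hf0. revert c. induction r as [|r IH]; intros c Hc.
  - unfold Hf; simpl. rewrite Rmax_left; [|lra].
    apply RInt_ext. intros x _. unfold hk. simpl. field.
  - set D := fun x => Hf f (S r) x - Kf f (S r) x.
    have HD : forall x, 0 < x -> is_derive D x 0.
    { intros x Hx. 
      have H1 := is_derive_minus _ _ _ _ _ (Hf_derivS f r x Hf0) (Kf_derivS f r x Hf0 (Kf_cont f r Hf0)).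
      rewrite (IH x) in H1; [|lra].
      unfold minus, plus, opp in H1; simpl in H1.
      replace 0 with (Kf f r x + - Kf f r x) by ring. exact H1. }
    have HC : forall x, continuity_pt D x.
    { intros x. apply cont_pt. apply (ex_derive_continuous (K:=R_AbsRing) (V:=R_NormedModule)).
      eexists. apply (is_derive_minus (K:=R_AbsRing) (V:=R_NormedModule)).
      apply Hf_derivS, Hf0. apply Kf_derivS. exact Hf0. apply Kf_cont, Hf0. }
    destruct (MVT_gen D 0 c (fun _ => 0)) as [x [_ Hx]].
    + intros x Hx. apply HD. rewrite Rmin_left in Hx; lra.
    + intros; apply HC.
    + have D0 : D 0 = 0.
      { unfold D, Hf; simpl. rewrite !(RInt_point (V:=R_CompleteNormedModule)). 
        change (@zero R_CompleteNormedModule) with 0. ring. }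
      rewrite D0 in Hx. unfold D in Hx. lra.
Qed.


Definition ind (c : R) (r : nat) (s : R) : R :=
  if Rle_dec s c then (c - s)^r / INR (Factorial.fact r) else 0.

Lemma ex_RInt_zero a b : ex_RInt (V:=R_CompleteNormedModule) (fun _ => 0) a b.
Proof. apply ex_RInt_const. Qed.

Lemma ex_hk g r c a b : cont g -> ex_RInt (V:=R_CompleteNormedModule) (hk g r c) a b.
Proof. intros Hg. apply ex_RInt_continuous. intros; apply hk_cont1, Hg. Qed.

Lemma Tint_all g r c t : cont g -> 0 <= t -> c <= t ->
  ex_RInt (V:=R_CompleteNormedModule) (fun s => ind c r s * g s) 0 t /\
  RInt (fun s => ind c r s * g s) 0 t = Kf g r c.
Proof.
  intros Hg Ht Hct.
  destruct (Rle_dec c 0) as [Hc|Hc].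
  - have E : forall x, Rmin 0 t < x < Rmax 0 t -> 0 = ind c r x * g x.
    { intros x Hx. rewrite Rmin_left in Hx; [|lra]. unfold ind.
      destruct (Rle_dec x c); [lra|]. simpl; ring. }
    split.
    + eapply ex_RInt_ext. apply E. apply ex_RInt_zero.
    + rewrite Kf_nonpos; [|lra]. rewrite -(RInt_ext _ _ _ _ E). apply RInt_zero.
  - have E1 : forall x, Rmin 0 c < x < Rmax 0 c -> hk g r c x = ind c r x * g x.
    { intros x Hx. rewrite Rmin_left in Hx; [|lra]. rewrite Rmax_right in Hx; [|lra].
      unfold ind, hk. destruct (Rle_dec x c); [reflexivity|lra]. }
    have E2 : forall x, Rmin c t < x < Rmax c t -> 0 = ind c r x * g x.
    { intros x Hx. rewrite Rmin_left in Hx; [|lra].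
      unfold ind. destruct (Rle_dec x c); [lra|simpl; ring]. }
    have X1 : ex_RInt (V:=R_CompleteNormedModule) (fun s => ind c r s * g s) 0 c.
    { eapply ex_RInt_ext. apply E1. apply ex_hk, Hg. }
    have X2 : ex_RInt (V:=R_CompleteNormedModule) (fun s => ind c r s * g s) c t.
    { eapply ex_RInt_ext. apply E2. apply ex_RInt_zero. }
    split.
    + eapply ex_RInt_Chasles; eauto.
    + rewrite -(RInt_Chasles _ _ _ _ X1 X2).
      rewrite -(RInt_ext _ _ _ _ E1) -(RInt_ext _ _ _ _ E2) RInt_zero.
      change (Hf g r c + 0 = Kf g r c). rewrite Rplus_0_r. apply Hf_Kf; auto; lra.
Qed.


Lemma RInt_plusR (f g : R -> R) a b : ex_RInt (V:=R_CompleteNormedModule) f a b -> ex_RInt (V:=R_CompleteNormedModule) g a b ->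
  RInt (fun x => f x + g x) a b = RInt f a b + RInt g a b.
Proof. intros. apply (RInt_plus (V:=R_CompleteNormedModule)); auto. Qed.
Lemma RInt_scalR (f : R -> R) a b k : ex_RInt (V:=R_CompleteNormedModule) f a b ->
  RInt (fun x => k * f x) a b = k * RInt f a b.
Proof. intros. apply (RInt_scal (V:=R_CompleteNormedModule)); auto. Qed.

Lemma RInt_bigsum {I : Type} (s : seq I) (alpha : I -> R) (F : I -> R -> R) a b :
  (forall i, ex_RInt (V:=R_CompleteNormedModule) (F i) a b) ->
  ex_RInt (V:=R_CompleteNormedModule) (fun x => (\sum_(i <- s) alpha i * F i x)%R) a b /\
  RInt (fun x => (\sum_(i <- s) alpha i * F i x)%R) a b = (\sum_(i <- s) alpha i * RInt (F i) a b)%R.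
Proof.
  intros HF. induction s as [|i s [IHe IHr]].
  - have E : forall x, Rmin a b < x < Rmax a b -> 0 = (\sum_(i <- [::]) alpha i * F i x)%R.
    { intros x _. rewrite big_nil. reflexivity. }
    split.
    + eapply ex_RInt_ext. apply E. apply ex_RInt_zero.
    + rewrite -(RInt_ext _ _ _ _ E) RInt_zero big_nil. reflexivity.
  - have E : forall x, Rmin a b < x < Rmax a b ->
       alpha i * F i x + (\sum_(j <- s) alpha j * F j x)%R = (\sum_(j <- i :: s) alpha j * F j x)%R.
    { intros x _. rewrite big_cons addRE mulRE. reflexivity. }
    have Hs : ex_RInt (V:=R_CompleteNormedModule) (fun x => alpha i * F i x) a b.
    { apply (ex_RInt_scal (V:=R_CompleteNormedModule)), HF. }
    split.
    + eapply ex_RInt_ext. apply E. apply (ex_RInt_plus (V:=R_CompleteNormedModule)); auto.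
    + rewrite -(RInt_ext _ _ _ _ E) RInt_plusR; auto.
      rewrite RInt_scalR; [|apply HF]. rewrite IHr big_cons addRE mulRE. reflexivity.
Qed.

Lemma Kf_lin {I : Type} (s : seq I) (alpha : I -> R) (F : I -> R -> R) r c :
  (forall i, cont (F i)) ->
  Kf (fun x => (\sum_(i <- s) alpha i * F i x)%R) r c = (\sum_(i <- s) alpha i * Kf (F i) r c)%R.
Proof.
  intros HF. revert c. induction r as [|r IH]; intros c; simpl.
  - apply RInt_bigsum. intros i. apply ex_RInt_continuous. intros; apply HF.
  - rewrite (RInt_ext _ (fun y => (\sum_(i <- s) alpha i * Kf (F i) r y)%R)).
    + apply RInt_bigsum. intros i. apply ex_RInt_continuous. intros; apply Kf_cont, HF.
    + intros; apply IH.
Qed.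

Lemma is_derive_plusR (f g : R -> R) x a b : is_derive f x a -> is_derive g x b ->
  is_derive (fun y => f y + g y) x (a + b).
Proof. intros. apply (is_derive_plus (K:=R_AbsRing) (V:=R_NormedModule)); auto. Qed.

Lemma is_derive_constR (c x : R) : is_derive (fun _ => c) x 0.
Proof. apply (is_derive_const (K:=R_AbsRing) (V:=R_NormedModule)). Qed.

Lemma is_derive_bigsum {I : Type} (s : seq I) (F : I -> R -> R) (dF : I -> R) (x : R) :
  (forall i, is_derive (F i) x (dF i)) ->
  is_derive (fun y => (\sum_(i <- s) F i y)%R : R) x ((\sum_(i <- s) dF i)%R : R).
Proof.
  intros HF. induction s as [|i s IH].
  - apply (is_derive_ext (fun _ => 0)).
    + intros; rewrite big_nil; reflexivity.
    + rewrite big_nil. apply is_derive_constR.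
  - apply (is_derive_ext (fun y => F i y + (\sum_(j <- s) F j y)%R)).
    + intros; rewrite big_cons addRE; reflexivity.
    + rewrite big_cons addRE. apply is_derive_plusR; auto.
Qed.


Lemma Zidx_bounds sigma t : 0 < sigma -> - sigma <= t ->
  (INR (Zidx sigma t) - 1) * sigma <= t < INR (Zidx sigma t) * sigma.
Proof.
  intros Hs Ht. unfold Zidx.
  have [H1 H2] := archimed (t / sigma).
  have Hq : -1 <= t / sigma.
  { apply (Rmult_le_reg_r sigma); [lra|]. unfold Rdiv. rewrite Rmult_assoc Rinv_l; lra. }
  have Hz : Z.le 0 (up (t / sigma)).
  { have : Z.lt (-1) (up (t / sigma)). { apply lt_IZR. simpl. lra. } lia. }
  rewrite INR_IZR_INZ Znat.Z2Nat.id; [|exact Hz].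
  have E : t = (t / sigma) * sigma by field; lra.
  split.
  - rewrite {2}E. apply Rmult_le_compat_r; lra.
  - rewrite {1}E. apply Rmult_lt_compat_r; lra.
Qed.

Definition indZ (sigma th : R) (r : nat) : R :=
  if Rle_dec 0 (th - (INR r - 1) * sigma)
  then (th - (INR r - 1) * sigma) ^ r / INR (Factorial.fact r) else 0.

Lemma Zfun_expand d sigma (A0 A1 : 'M[R]_d) N th : 0 < sigma -> - sigma <= th ->
  th < INR N * sigma - sigma ->
  Zfun sigma A0 A1 th = (\sum_(r < N) indZ sigma th r *: Qm A0 A1 r)%R.
Proof.
  intros Hs Ht HN. unfold Zfun.
  destruct (Rlt_dec th (- sigma)) as [Hlt|Hnlt]; [lra|].
  have [B1 B2] := Zidx_bounds sigma th Hs Ht.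
  set u := Zidx sigma th in B1 B2 *.
  have Hu : (u.+1 <= N)%N.
  { apply/leP. apply INR_lt.
    have : INR u * sigma < INR N * sigma by lra.
    intros H. apply Rmult_lt_reg_r in H; [|lra]. exact H. }
  rewrite (big_ord_widen N (fun r => (Rdiv (pow (Rminus th (Rmult (Rminus (INR r) 1) sigma)) r) (INR (Factorial.fact r))) *: Qm A0 A1 r)%R Hu).
  rewrite big_mkcond. apply eq_bigr. intros r _.
  unfold indZ. case: ifP => Hr.
  - destruct (Rle_dec 0 (th - (INR r - 1) * sigma)) as [C0|C]; [reflexivity|].
    exfalso. apply C.
    have : INR r <= INR u. { apply le_INR. apply/leP. by []. }
    intros H. nra.
  - destruct (Rle_dec 0 (th - (INR r - 1) * sigma)) as [C|C0]; [|by rewrite scale0r].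
    exfalso.
    have : INR u + 1 <= INR r.
    { rewrite -S_INR. apply le_INR. apply/leP. rewrite ltnNge in Hr. 
      move/negbFE: Hr. by []. }
    intros H. nra.
Qed.


Lemma RInt_bigsum0 {I : Type} (s : seq I) (F : I -> R -> R) a b :
  (forall i, ex_RInt (V:=R_CompleteNormedModule) (F i) a b) ->
  ex_RInt (V:=R_CompleteNormedModule) (fun x => (\sum_(i <- s) F i x)%R) a b /\
  RInt (fun x => (\sum_(i <- s) F i x)%R) a b = (\sum_(i <- s) RInt (F i) a b)%R.
Proof.
  intros HF. have [H1 H2] := RInt_bigsum s (fun _ => 1%R) F a b HF.
  have E : forall x, Rmin a b < x < Rmax a b -> (\sum_(i <- s) 1 * F i x)%R = (\sum_(i <- s) F i x)%R.
  { intros x _. apply eq_bigr => i _. by rewrite mul1r. }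
  split.
  - eapply ex_RInt_ext. apply E. exact H1.
  - rewrite -(RInt_ext _ _ _ _ E) H2. apply eq_bigr => i _. by rewrite mul1r.
Qed.

Lemma indZ_ind sigma t s r :
  indZ sigma (t - sigma - s) r = ind (t - INR r * sigma) r s.
Proof.
  unfold indZ, ind.
  replace (t - sigma - s - (INR r - 1) * sigma) with (t - INR r * sigma - s) by ring.
  destruct (Rle_dec 0 (t - INR r * sigma - s)); destruct (Rle_dec s (t - INR r * sigma)); 
   first [reflexivity | lra].
Qed.

Lemma X_entry d sigma (A0 A1 : 'M[R]_d) (G : R -> 'M[R]_d) N t i j :
  0 < sigma -> (forall a b, cont (fun s => Gstar G s a b)) ->
  0 <= t -> t < INR N * sigma ->
  Xfun sigma A0 A1 G t i j =
  (\sum_(r < N) \sum_(a < d) Qm A0 A1 r i a * Kf (fun s => Gstar G s a j) r (t - INR r * sigma))%R.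
Proof.
  intros Hs HG Ht HN. unfold Xfun. rewrite mxE.
  have E : forall s, Rmin 0 t < s < Rmax 0 t ->
     (Zfun sigma A0 A1 (t - sigma - s) *m Gstar G s)%R i j =
     (\sum_(r < N) \sum_(a < d) Qm A0 A1 r i a * (ind (t - INR r * sigma) r s * Gstar G s a j))%R.
  { intros s Hs'. rewrite Rmin_left in Hs'; [|lra]. rewrite Rmax_right in Hs'; [|lra].
    rewrite (Zfun_expand d sigma A0 A1 N); [|lra|lra|lra].
    rewrite mulmx_suml summxE. apply eq_bigr => r _.
    rewrite -scalemxAl mxE mxE mulr_sumr. apply eq_bigr => a _.
    rewrite indZ_ind. by rewrite mulrCA. }
  rewrite (RInt_ext _ _ _ _ E).
  have Hex : forall (r : 'I_N) (a : 'I_d), ex_RInt (V:=R_CompleteNormedModule)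
       (fun s => ind (t - INR r * sigma) r s * Gstar G s a j) 0 t.
  { intros r a. apply Tint_all; auto. have := pos_INR r. nra. }
  have [_ H] := RInt_bigsum0 (index_enum 'I_N) (fun r s => (\sum_(a < d) Qm A0 A1 r i a * (ind (t - INR r * sigma) r s * Gstar G s a j))%R) 0 t
     (fun r => proj1 (RInt_bigsum (index_enum 'I_d) (fun a => Qm A0 A1 r i a) _ 0 t (Hex r))).
  rewrite H. apply eq_bigr => r _.
  have [_ H'] := RInt_bigsum (index_enum 'I_d) (fun a => Qm A0 A1 r i a) _ 0 t (Hex r).
  rewrite H'. apply eq_bigr => a _. f_equal.
  apply Tint_all; auto. have := pos_INR r. nra.
Qed.


Definition Kmat {d} (G : R -> 'M[R]_d) r c : 'M[R]_d :=
  (\matrix_(a, b) Kf (fun s => Gstar G s a b) r c)%R.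

Definition Ym {d} (A0 A1 : 'M[R]_d) (G : R -> 'M[R]_d) sigma N t : 'M[R]_d :=
  (\sum_(r < N) Qm A0 A1 r *m Kmat G r (t - INR r * sigma))%R.

Lemma X_init d sigma (A0 A1 : 'M[R]_d) (G : R -> 'M[R]_d) t :
  0 < sigma -> - sigma <= t <= 0 -> Xfun sigma A0 A1 G t = 0%R.
Proof.
  intros Hs [Ht1 Ht2]. apply/matrixP => i j. rewrite !mxE.
  rewrite (RInt_ext _ (fun _ => 0)).
  - apply RInt_zero.
  - intros s Hs0. rewrite zeroRE in Hs0. rewrite Rmin_right in Hs0; [|lra]. rewrite Rmax_left in Hs0; [|lra].
    unfold Zfun. destruct (Rlt_dec (t - sigma - s) (- sigma)) as [H|H]; [|lra].
    by rewrite mul0mx mxE.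
Qed.

Lemma X_Y d sigma (A0 A1 : 'M[R]_d) (G : R -> 'M[R]_d) N t :
  0 < sigma -> (forall a b, cont (fun s => Gstar G s a b)) ->
  - sigma <= t -> t < INR N * sigma ->
  Xfun sigma A0 A1 G t = Ym A0 A1 G sigma N t.
Proof.
  intros Hs HG Ht HN. destruct (Rle_dec 0 t) as [H0|H0].
  - apply/matrixP => i j. rewrite (X_entry d sigma A0 A1 G N t i j Hs HG H0 HN).
    unfold Ym. rewrite summxE. apply eq_bigr => r _. rewrite mxE. apply eq_bigr => a _.
    by rewrite mxE.
  - rewrite X_init; [|lra|lra]. unfold Ym. rewrite big1 //. intros r _.
    have -> : Kmat G r (t - INR r * sigma) = 0%R.
    { apply/matrixP => a b. rewrite !mxE. apply Kf_nonpos. have := pos_INR r. nra. }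
    by rewrite mulmx0.
Qed.

Lemma Kmat_comm d (A1 : 'M[R]_d) (G : R -> 'M[R]_d) r c :
  (forall a b, cont (fun s => Gstar G s a b)) ->
  (forall s, (A1 *m Gstar G s = Gstar G s *m A1)%R) ->
  (A1 *m Kmat G r c = Kmat G r c *m A1)%R.
Proof.
  intros HG HC. apply/matrixP => i j. rewrite !mxE.
  under eq_bigr => a _ do rewrite mxE.
  rewrite -(Kf_lin (index_enum 'I_d) (fun a => A1 i a) (fun a s => Gstar G s a j)); [|intros; apply HG].
  rewrite (_ : (fun x => \sum_(i0 <- index_enum 'I_d) A1 i i0 * Gstar G x i0 j)%R =
               (fun x => \sum_(i0 <- index_enum 'I_d) A1 i0 j * Gstar G x i i0)%R).
  - rewrite Kf_lin; [|intros; apply HG]. apply eq_bigr => a _. by rewrite mxE mulrC.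
  - apply functional_extensionality => s.
    have := f_equal (fun M : 'M[R]_d => M i j) (HC s). rewrite !mxE => ->.
    apply eq_bigr => a _. by rewrite mulrC.
Qed.


Lemma is_derive_eq (f : R -> R) x l l' : is_derive f x l -> l = l' -> is_derive f x l'.
Proof. intros H <-. exact H. Qed.

Lemma is_derive_shift (f : R -> R) x c l : is_derive f (x - c) l -> is_derive (fun y => f (y - c)) x l.
Proof.
  intros H.
  have H1 : is_derive (fun y : R => y - c) x 1.
  { auto_derive; try easy; ring. }
  have H2 := is_derive_comp f (fun y => y - c) x l 1 H H1.
  apply (is_derive_eq _ _ _ _ H2). unfold scal; simpl. unfold mult; simpl. ring.
Qed.

Definition Dv {d} (G : R -> 'M[R]_d) sigma t (j : 'I_d) (r : nat) (a : 'I_d) : R :=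
  match r with
  | O => Gstar G t a j
  | S r' => Kf (fun s => Gstar G s a j) r' (t - INR (S r') * sigma)
  end.

Lemma Y_deriv d sigma (A0 A1 : 'M[R]_d) (G : R -> 'M[R]_d) M t i j :
  (forall a b, cont (fun s => Gstar G s a b)) -> 0 < t ->
  is_derive (fun y => Ym A0 A1 G sigma M y i j) t
    ((\sum_(r < M) \sum_(a < d) Qm A0 A1 r i a * Dv G sigma t j r a)%R : R).
Proof.
  intros HG Ht.
  apply (is_derive_ext (fun y => (\sum_(r < M) \sum_(a < d) Qm A0 A1 r i a * Kf (fun s => Gstar G s a j) r (y - INR r * sigma))%R : R)).
  { intros y. unfold Ym. rewrite summxE. apply eq_bigr => r _. rewrite mxE. apply eq_bigr => a _.
    by rewrite mxE. }
  apply is_derive_bigsum => r. apply is_derive_bigsum => a.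
  apply (is_derive_ext (fun y => Rmult (Qm A0 A1 r i a) (Kf (fun s => Gstar G s a j) r (y - INR r * sigma)))).
  { intros y. by rewrite mulRE. }
  apply (is_derive_eq _ _ (Rmult (Qm A0 A1 r i a) (Dv G sigma t j r a))); [|by rewrite mulRE].
  apply is_derive_scal.
  destruct r as [[|r] Hr]; simpl.
  - apply (is_derive_ext (Kf (fun s => Gstar G s a j) 0)).
    { intros y. simpl. rewrite Rmult_0_l Rminus_0_r. reflexivity. }
    apply Kf_deriv0; auto.
  - apply is_derive_shift. apply Kf_derivS; [apply HG|apply Kf_cont, HG].
Qed.


Definition Dm {d} (G : R -> 'M[R]_d) sigma t (r : nat) : 'M[R]_d :=
  match r with
  | O => Gstar G t
  | S r' => Kmat G r' (t - INR (S r') * sigma)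
  end.

Lemma KmatE d (G : R -> 'M[R]_d) r c a b : Kmat G r c a b = Kf (fun s => Gstar G s a b) r c.
Proof. unfold Kmat. by rewrite mxE. Qed.

Lemma Dv_Dm d sigma (A0 A1 : 'M[R]_d) (G : R -> 'M[R]_d) M t i j :
  (\sum_(r < M) \sum_(a < d) Qm A0 A1 r i a * Dv G sigma t j r a)%R =
  (\sum_(r < M) Qm A0 A1 r *m Dm G sigma t r)%R i j.
Proof.
  rewrite summxE. apply eq_bigr => r _. rewrite mxE. apply eq_bigr => a _.
  destruct r as [[|r] Hr].
  - reflexivity.
  - unfold Dv, Dm. by rewrite KmatE.
Qed.

Lemma key_identity d sigma (A0 A1 : 'M[R]_d) (G : R -> 'M[R]_d) N t :
  (forall a b, cont (fun s => Gstar G s a b)) ->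
  (forall s, (A1 *m Gstar G s = Gstar G s *m A1)%R) ->
  (\sum_(r < N.+1) Qm A0 A1 r *m Dm G sigma t r)%R =
  (A0 *m Ym A0 A1 G sigma N (t - sigma) + Ym A0 A1 G sigma N (t - sigma) *m A1 + Gstar G t)%R.
Proof.
  intros HG HC.
  rewrite big_ord_recl /= mul1mx addrC. congr (_ + _)%R.
  unfold Ym. rewrite mulmx_sumr mulmx_suml -big_split /=. apply eq_bigr => r _.

  have -> : t - INR r.+1 * sigma = t - sigma - INR r * sigma.
  { rewrite S_INR. ring. }
  rewrite mulmxDl !mulmxA. congr (_ + _)%R.
  by rewrite -!mulmxA Kmat_comm.
Qed.

Lemma deriv_right (f : R -> R) l : is_derive f 0 l ->
  filterlim (fun h => (f h - f 0) / h) (at_right 0) (locally l).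
Proof.
  intros H. apply is_derive_Reals in H.
  apply filterlim_locally. intros eps.
  destruct (H eps (cond_pos eps)) as [delta Hd].
  exists delta. intros y Hy Hy0.
  change (Rabs (y - 0) < delta) in Hy.
  change (Rabs ((f y - f 0) / y - l) < eps).
  have := Hd y. rewrite Rplus_0_l. intros Hd'. apply Hd'; [lra|]. 
  rewrite Rminus_0_r in Hy. exact Hy.
Qed.

Lemma Gstar_cont d (G : R -> 'M[R]_d) :
  (forall (t : R) (i j : 'I_d), (0 <= t)%R ->
     filterlim (fun s => G s i j) (within (fun s => (0 <= s)%R) (locally t))
               (locally (G t i j))) ->
  forall a b, cont (fun s => Gstar G s a b).
Proof.
  intros HG a b x.
  apply (continuous_ext (fun s => G (Rmax s 0) a b)).
  { intros s. unfold Gstar. destruct (Rlt_dec s 0).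
    - rewrite Rmax_right; [reflexivity|lra].
    - rewrite Rmax_left; [reflexivity|lra]. }
  unfold continuous.
  apply (filterlim_comp _ _ _ (fun s => Rmax s 0) (fun s => G s a b) (locally x)
           (within (fun s => (0 <= s)%R) (locally (Rmax x 0)))).
  - intros P HP. unfold within in HP.
    have H1 : locally x (fun s => (0 <= Rmax s 0)%R -> P (Rmax s 0)) := cont_Rmax0 x _ HP.
    change (locally x (fun s => P (Rmax s 0))).
    apply (filter_imp (fun s => (0 <= Rmax s 0)%R -> P (Rmax s 0))); [|exact H1].
    intros s Hs. apply Hs. apply/RleP. apply Rmax_r.
  - apply HG. apply/RleP. apply Rmax_r.
Qed.


Local Close Scope R_scope.

Theorem theorem6 (d : nat) (sigma : R) (A0 A1 : 'M[R]_d) (G : R -> 'M[R]_d) :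
  (0 < d)%N ->
  (0 < sigma)%R ->
  (* G is continuous on [0, +oo) *)
  (forall (t : R) (i j : 'I_d), (0 <= t)%R ->
     filterlim (fun s => G s i j) (within (fun s => 0 <= s)%R (locally t))
               (locally (G t i j))) ->
  (* A1 commutes with G on [0, +oo) *)
  (forall t : R, (0 <= t)%R -> (A1 *m G t = G t *m A1)%R) ->
  let X := Xfun sigma A0 A1 G in
  (* the differential equation for t > 0 (two-sided derivative) *)
  (forall (t : R) (i j : 'I_d), (0 < t)%R ->
     is_derive (fun s => X s i j) t
       ((A0 *m X (t - sigma)%R + X (t - sigma)%R *m A1 + G t)%R i j)) /\
  (* at t = 0 (endpoint of [0,+oo)): right derivative *)
  (forall i j : 'I_d,
     filterlim (fun h => ((X h i j - X 0%R i j) / h)%R) (at_right 0%R)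
       (locally ((A0 *m X (- sigma)%R + X (- sigma)%R *m A1 + G 0%R)%R i j))) /\
  (* initial condition *)
  (forall t : R, (- sigma <= t <= 0)%R -> X t = 0%R).
Proof.
Local Open Scope R_scope.

  intros Hd Hs0 HGc HC0 X.
  have Hs : (0 < sigma) by move/RltP: Hs0; rewrite zeroRE.
  have HG := Gstar_cont d G HGc.
  have HC : forall s, (A1 *m Gstar G s = Gstar G s *m A1)%R.
  { intros s. unfold Gstar. destruct (Rlt_dec s 0).
    - apply HC0. apply/RleP. apply Rle_refl.
    - apply HC0. apply/RleP. rewrite zeroRE. lra. }
  split; [|split].
  - intros t i j Ht0. have Ht : (0 < t) by move/RltP: Ht0; rewrite zeroRE.
    have [_ HN] := Zidx_bounds sigma t Hs ltac:(lra).
    set N := Zidx sigma t in HN *.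
    have HN1 : (t < INR N.+1 * sigma) by rewrite S_INR; lra.
    apply (is_derive_ext_loc (fun y => Ym A0 A1 G sigma N.+1 y i j)).
    { apply (locally_interval _ t (Rbar.Finite (- sigma)) (Rbar.Finite (INR N.+1 * sigma))).
      - change (- sigma < t). lra.
      - change (t < INR N.+1 * sigma). lra.
      intros y Hy1 Hy2. simpl in Hy1, Hy2. unfold X. rewrite (X_Y d sigma A0 A1 G N.+1 y Hs HG); auto; lra. }
    eapply is_derive_eq. apply Y_deriv; auto.
    rewrite Dv_Dm key_identity //.
    have -> : (t - sigma)%R = (t - sigma) by [].
    unfold X. rewrite (X_Y d sigma A0 A1 G N (t - sigma) Hs HG); try lra.
    have -> : Gstar G t = G t.
    { unfold Gstar. destruct (Rlt_dec t 0); [lra|reflexivity]. }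
    reflexivity.
  - intros i j. unfold X.
    have -> : Xfun sigma A0 A1 G (- sigma)%R = 0%R.
    { apply X_init; auto. change (- sigma <= - sigma <= 0). lra. }
    rewrite mulmx0 mul0mx !add0r.
    have HX : forall h, (0 <= h) -> (h < sigma) ->
        Xfun sigma A0 A1 G h i j = RInt (fun s => Gstar G s i j) 0 h.
    { intros h H1 H2.
      rewrite (X_Y d sigma A0 A1 G 1 h Hs HG); [|lra|simpl; lra].
      unfold Ym. rewrite big_ord1 /= mul1mx KmatE /=.
      rewrite Rmult_0_l Rminus_0_r Rmax_left; [reflexivity|lra]. }
    have -> : G 0%R i j = Gstar G 0 i j.
    { unfold Gstar. destruct (Rlt_dec 0 0); [lra|reflexivity]. }
    apply (filterlim_ext_loc (fun h => (RInt (fun s => Gstar G s i j) 0 h - RInt (fun s => Gstar G s i j) 0 0) / h)).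
    + unfold at_right, within.
      apply (locally_interval _ 0%R (Rbar.Finite (- sigma)) (Rbar.Finite sigma)).
      * change (- sigma < 0). lra.
      * change (0 < sigma). lra.
      * intros y Hy1 Hy2. change (y < sigma) in Hy2. intros Hy0. rewrite zeroRE in Hy0.
        rewrite (HX y) ?(HX 0); try lra. rewrite RdivE RminusE. reflexivity.
    + apply deriv_right. apply is_derive_RInt0, HG.
  - intros t Ht. move/andP: Ht => [/RleP H1 /RleP H2]. unfold X. apply X_init; auto.
Qed.
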